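(* There is a constant $C>0$ such that for all $\boldsymbol{m}=(m_1,m_2)\in\mathbb{N}^2$ the Lebesgue constant of interpolation in $\Pi_\square$ on the rhodonea nodes satisfies \[\Lambda^{(\boldsymbol{m})}_\square:=\sup_{\mathscr{f}\in C(\mathbb{D}),\ \|\mathscr{f}\|_\infty\le1}\ \sup_{(r,\theta)\in[0,1]\times[-\pi,\pi]}|P_f(r,\theta)|\ \le\ C\ln(m_1+1)\ln(m_2+1),\] where $P_f$ denotes the unique function in $\Pi_\square$ with $P_f(r_{i_1},\theta_{i_2})=\mathscr{f}(r_{i_1},\theta_{i_2})$ for all $\boldsymbol{i}\in\mathrm{I}^{(\boldsymbol{m})}$.
   Context: Polar coordinates $(r,\theta)\in[0,1]\times[-\pi,\pi]$ on the unit disk; $C(\mathbb{D})$ is the set of continuous $\mathscr{f}$ on $[0,1]\times[-\pi,\pi]$ with $\mathscr{f}(r,-\pi)=\mathscr{f}(r,\pi)$ and $\mathscr{f}(0,\theta)$ independent of $\theta$; $\|\mathscr{f}\|_\infty=\sup_{(r,\theta)}|\mathscr{f}(r,\theta)|$. $\mathrm{I}^{(\boldsymbol{m})}=\{(i_1,i_2)\in\mathbb{Z}^2:\ 0\le i_1\le m_1,\ -2m_2<i_2\le 2m_2,\ i_2\le0\text{ if }i_1=m_1,\ i_1+i_2\text{ even}\}$, $r_{i_1}=\cos\!\big(\frac{i_1\pi}{2m_1}\big)$, $\theta_{i_2}=\frac{i_2\pi}{2m_2}$. $\Pi_\square=\mathrm{span}\{X_{\boldsymbol{\gamma}}:\boldsymbol{\gamma}\in\Gamma_\square\}$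 with $X_{\boldsymbol{\gamma}}(r,\theta)=T_{\gamma_1}(r)e^{\mathrm{i}\gamma_2\theta}$, $T_n(r)=\cos(n\arccos r)$, and $\Gamma_\square=\{\boldsymbol{\gamma}\in\mathbb{Z}^2: 0\le\gamma_1\le2m_1,\ -m_2<\gamma_2\le m_2,\ \gamma_1+\gamma_2\text{ even}\}$; the interpolation problem in $\Pi_\square$ on these nodes is uniquely solvable. *)

(* Defs.v *)
From Stdlib Require Import Reals ZArith List.
Open Scope R_scope.

Definition chebT (n : nat) (r : R) : R := cos (INR n * acos r).

Definition rnode (m1 i1 : nat) : R := cos (INR i1 * PI / (2 * INR m1)).
Definition thnode (m2 : nat) (i2 : Z) : R := IZR i2 * PI / (2 * INR m2).

Definition in_Im (m1 m2 : nat) (i1 : nat) (i2 : Z) : Prop :=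
  (i1 <= m1)%nat /\
  (- 2 * Z.of_nat m2 < i2 <= 2 * Z.of_nat m2)%Z /\
  (i1 = m1 -> (i2 <= 0)%Z) /\
  Z.even (Z.of_nat i1 + i2) = true.

(* Index set Gamma_square as an explicit finite list:
   0 <= g1 <= 2 m1, -m2 < g2 <= m2, g1 + g2 even. *)
Definition Gamma_sq (m1 m2 : nat) : list (nat * Z) :=
  filter (fun g => Z.even (Z.of_nat (fst g) + snd g))
    (list_prod (seq 0 (2 * m1 + 1))
       (map (fun k => (Z.of_nat k - Z.of_nat m2 + 1)%Z) (seq 0 (2 * m2)))).

Definition sumL {A : Type} (l : list A) (F : A -> R) : R :=
  fold_right (fun x acc => F x + acc) 0 l.

(* An element of Pi_square with complex coefficients c_g = a g + i b g:
   P(r,theta) = sum_{g in Gamma} c_g T_{g1}(r) e^{i g2 theta}.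
   Real and imaginary parts: *)
Definition Psq_re (m1 m2 : nat) (a b : nat -> Z -> R) (r th : R) : R :=
  sumL (Gamma_sq m1 m2) (fun g =>
    chebT (fst g) r *
      (a (fst g) (snd g) * cos (IZR (snd g) * th)
       - b (fst g) (snd g) * sin (IZR (snd g) * th))).

Definition Psq_im (m1 m2 : nat) (a b : nat -> Z -> R) (r th : R) : R :=
  sumL (Gamma_sq m1 m2) (fun g =>
    chebT (fst g) r *
      (a (fst g) (snd g) * sin (IZR (snd g) * th)
       + b (fst g) (snd g) * cos (IZR (snd g) * th))).

Definition in_dom (r th : R) : Prop := 0 <= r <= 1 /\ - PI <= th <= PI.

Definition cont_rect (f : R -> R -> R) : Prop :=
  forall r th, in_dom r th -> forall eps, 0 < eps ->
    exists delta, 0 < delta /\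
      forall r' th', in_dom r' th' -> Rabs (r - r') < delta ->
        Rabs (th - th') < delta -> Rabs (f r th - f r' th') < eps.

Definition in_CD (f : R -> R -> R) : Prop :=
  cont_rect f /\
  (forall r, 0 <= r <= 1 -> f r (- PI) = f r PI) /\
  (forall th th', - PI <= th <= PI -> - PI <= th' <= PI -> f 0 th = f 0 th').

Definition cmod (x y : R) : R := sqrt (x * x + y * y).

(* Main.v *)
Require Import Defs.
From Stdlib Require Import Reals Lra Lia ZArith List.
From Coquelicot Require Import Coquelicot.
Open Scope R_scope.

Open Scope R_scope.

Fixpoint rsum (n:nat) (f:nat->R) : R := match n with O => 0 | S k => rsum k f + f k end.
Fixpoint csum (n:nat) (f:nat->C) : C := match n with O => RtoC 0 | S k => Cplus (csum k f) (f k) end.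

Lemma rsum_ext n f g : (forall k, (k < n)%nat -> f k = g k) -> rsum n f = rsum n g.
Proof. induction n; simpl; intros H; auto. rewrite IHn by (intros; apply H; lia). rewrite H by lia; auto. Qed.
Lemma rsum_le n f g : (forall k, (k < n)%nat -> f k <= g k) -> rsum n f <= rsum n g.
Proof. induction n; simpl; intros H; [lra|]. assert (rsum n f <= rsum n g) by (apply IHn; intros; apply H; lia).
 specialize (H n ltac:(lia)). lra. Qed.
Lemma rsum_nonneg n f : (forall k, (k < n)%nat -> 0 <= f k) -> 0 <= rsum n f.
Proof. intros H. replace 0 with (rsum n (fun _ => 0)). apply rsum_le; auto.
 induction n; simpl; auto. rewrite IHn; [lra| intros; apply H; lia]. Qed.
Lemma rsum_plus n f g : rsum n (fun k => f k + g k) = rsum n f + rsum n g.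
Proof. induction n; simpl; [lra|]. rewrite IHn; lra. Qed.
Lemma rsum_scal n c f : rsum n (fun k => c * f k) = c * rsum n f.
Proof. induction n; simpl; [lra|]. rewrite IHn; lra. Qed.
Lemma rsum_shift n f : rsum (S n) f = f O + rsum n (fun k => f (S k)).
Proof. induction n; simpl in *; [lra|]. rewrite IHn. lra. Qed.
Lemma rsum_add n m f : rsum (n + m) f = rsum n f + rsum m (fun k => f (n + k)%nat).
Proof. induction m; simpl. rewrite Nat.add_0_r; lra. rewrite Nat.add_succ_r. simpl. rewrite IHm. lra. Qed.
Lemma rsum_rev n f : rsum n (fun k => f (n - 1 - k)%nat) = rsum n f.
Proof. induction n; auto.
 rewrite rsum_shift. rewrite (rsum_ext n _ (fun k => f (n - 1 - k)%nat)) by (intros; f_equal; lia).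
 rewrite IHn. simpl. replace (n - 0 - 0)%nat with n by lia. lra. Qed.
Lemma rsum_mono n m f : (n <= m)%nat -> (forall k, (k < m)%nat -> 0 <= f k) -> rsum n f <= rsum m f.
Proof. intros Hnm H. replace m with (n + (m - n))%nat by lia. rewrite rsum_add.
 assert (0 <= rsum (m - n) (fun k => f (n + k)%nat)). apply rsum_nonneg. intros; apply H; lia. lra. Qed.
Lemma rsum_const n c : rsum n (fun _ => c) = INR n * c.
Proof. induction n; simpl rsum. simpl; lra. rewrite IHn, S_INR; lra. Qed.

Open Scope C_scope.
Lemma csum_ext n f g : (forall k, (k < n)%nat -> f k = g k) -> csum n f = csum n g.
Proof. induction n; simpl; intros H; auto. rewrite IHn by (intros; apply H; lia). rewrite H by lia; auto. Qed.
Lemma csum_plus n f g : csum n (fun k => f k + g k) = csum n f + csum n g.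
Proof. induction n; simpl. ring. rewrite IHn; ring. Qed.
Lemma csum_scal n c f : csum n (fun k => c * f k) = c * csum n f.
Proof. induction n; simpl. ring. rewrite IHn; ring. Qed.
Lemma csum_scal_r n c f : csum n (fun k => f k * c) = csum n f * c.
Proof. induction n; simpl. ring. rewrite IHn; ring. Qed.
Lemma csum_zero n (f : nat -> C) : (forall k, (k < n)%nat -> f k = 0) -> csum n f = 0.
Proof. induction n; simpl; intros H; auto. rewrite IHn by (intros; apply H; lia). rewrite H by lia; ring. Qed.
Lemma csum_swap n m (f : nat -> nat -> C) :
  csum n (fun i => csum m (fun j => f i j)) = csum m (fun j => csum n (fun i => f i j)).
Proof. induction n; simpl. rewrite csum_zero; auto. rewrite IHn. rewrite <- csum_plus. auto. Qed.
Lemma csum_single n (f : nat -> C) k0 : (k0 < n)%nat -> (forall k, (k < n)%nat -> k <> k0 -> f k = 0) -> csum n f = f k0.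
Proof. induction n; intros H1 H2; [lia|]. simpl. destruct (Nat.eq_dec k0 n).
 - subst. rewrite csum_zero. ring. intros; apply H2; lia.
 - rewrite IHn by (try lia; intros; apply H2; lia). rewrite (H2 n) by lia. ring. Qed.
Lemma Cmod_csum n f : (Cmod (csum n f) <= rsum n (fun k => Cmod (f k)))%R.
Proof. induction n; simpl. rewrite Cmod_0; lra. eapply Rle_trans. apply Cmod_triangle. lra. Qed.
Lemma csum_fst n f : fst (csum n f) = rsum n (fun k => fst (f k)).
Proof. induction n; simpl; auto. rewrite <- IHn. auto. Qed.
Lemma csum_snd n f : snd (csum n f) = rsum n (fun k => snd (f k)).
Proof. induction n; simpl; auto. rewrite <- IHn. auto. Qed.
Lemma csum_RtoC n f : csum n (fun k => RtoC (f k)) = RtoC (rsum n f).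
Proof. induction n; simpl; auto. rewrite IHn. unfold RtoC, Cplus; simpl. f_equal; lra. Qed.

Definition csumL {A} (l : list A) (f : A -> C) : C := fold_right (fun x acc => f x + acc) (RtoC 0) l.
Lemma csumL_ext {A} (l : list A) f g : (forall x, In x l -> f x = g x) -> csumL l f = csumL l g.
Proof. induction l; simpl; intros H; auto. rewrite H by auto. rewrite IHl; auto. Qed.
Lemma csumL_swap {A} (l : list A) n (F : A -> nat -> C) :
  csumL l (fun x => csum n (fun i => F x i)) = csum n (fun i => csumL l (fun x => F x i)).
Proof. induction l; simpl. rewrite csum_zero; auto. rewrite IHl, <- csum_plus; auto. Qed.
Lemma csumL_scal_r {A} (l : list A) f c : csumL l (fun x => f x * c) = csumL l f * c.
Proof. induction l; simpl. ring. rewrite IHl; ring. Qed.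

Definition cis (x : R) : C := (cos x, sin x).
Lemma cis_add x y : cis (x + y) = cis x * cis y.
Proof. unfold cis, Cmult; simpl. rewrite cos_plus, sin_plus. f_equal; ring. Qed.
Lemma Cmod_cis x : Cmod (cis x) = 1%R.
Proof. unfold Cmod, cis; simpl. pose proof (sin2_cos2 x). unfold Rsqr in *.
 replace (cos x * (cos x * 1) + sin x * (sin x * 1))%R with 1%R by lra. apply sqrt_1. Qed.
Lemma Cmod_RtoC_abs x : Cmod (RtoC x) = Rabs x.
Proof. apply Cmod_R. Qed.
Lemma rsum_S n f : rsum (S n) f = (rsum n f + f n)%R.
Proof. reflexivity. Qed.
Lemma csum_S n f : csum (S n) f = csum n f + f n.
Proof. reflexivity. Qed.
Lemma rsum_zero n f : (forall k, (k < n)%nat -> f k = 0%R) -> rsum n f = 0%R.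
Proof. intros H. rewrite (rsum_ext n f (fun _ => 0%R)) by auto. rewrite rsum_const. lra. Qed.
Lemma rsum_swap n m (f : nat -> nat -> R) :
  rsum n (fun i => rsum m (fun j => f i j)) = rsum m (fun j => rsum n (fun i => f i j)).
Proof. induction n; simpl. rewrite rsum_zero; auto. rewrite IHn. rewrite <- rsum_plus. auto. Qed.
Lemma rsum_single n f k0 : (k0 < n)%nat -> (forall k, (k < n)%nat -> k <> k0 -> f k = 0%R) -> rsum n f = f k0.
Proof. induction n; intros H1 H2; [lia|]. simpl. destruct (Nat.eq_dec k0 n).
 - subst. rewrite rsum_zero. lra. intros; apply H2; lia.
 - rewrite IHn by (try lia; intros; apply H2; lia). rewrite (H2 n) by lia. lra. Qed.
Lemma rsum_scal_r n c f : rsum n (fun k => (f k * c)%R) = (rsum n f * c)%R.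
Proof. induction n; simpl. lra. rewrite IHn; lra. Qed.
Lemma Cmod_csum2 n m (f : nat -> nat -> C) :
  (Cmod (csum n (fun i => csum (m i) (fun j => f i j))) <= rsum n (fun i => rsum (m i) (fun j => Cmod (f i j))))%R.
Proof. eapply Rle_trans. apply Cmod_csum. apply rsum_le. intros; apply Cmod_csum. Qed.
Lemma rsum_pull a b n f : (a * (b * rsum n f) = b * rsum n (fun k => a * f k))%R.
Proof. rewrite rsum_scal. ring. Qed.

Open Scope R_scope.

Lemma TC a p L : 2 * sin p * rsum L (fun j => cos (a + 2 * INR j * p)) = sin (a + (2 * INR L - 1) * p) - sin (a - p).
Proof. induction L; simpl rsum. simpl INR. replace (a + (2*0-1)*p) with (a - p) by ring. ring.
 rewrite Rmult_plus_distr_l, IHL. rewrite S_INR.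
 replace (a + (2 * (INR L + 1) - 1) * p) with ((a + 2 * INR L * p) + p) by ring.
 replace (a + (2 * INR L - 1) * p) with ((a + 2 * INR L * p) - p) by ring.
 rewrite sin_plus, (sin_minus (a + 2 * INR L * p) p). ring. Qed.
Lemma TS a p L : 2 * sin p * rsum L (fun j => sin (a + 2 * INR j * p)) = cos (a - p) - cos (a + (2 * INR L - 1) * p).
Proof. induction L; simpl rsum. simpl INR. replace (a + (2*0-1)*p) with (a - p) by ring. ring.
 rewrite Rmult_plus_distr_l, IHL. rewrite S_INR.
 replace (a + (2 * (INR L + 1) - 1) * p) with ((a + 2 * INR L * p) + p) by ring.
 replace (a + (2 * INR L - 1) * p) with ((a + 2 * INR L * p) - p) by ring.
 rewrite cos_plus, (cos_minus (a + 2 * INR L * p) p). ring. Qed.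

Lemma geo_fst a p L : fst (csum L (fun j => cis (a + 2 * INR j * p))) = rsum L (fun j => cos (a + 2 * INR j * p)).
Proof. rewrite csum_fst. reflexivity. Qed.
Lemma geo_snd a p L : snd (csum L (fun j => cis (a + 2 * INR j * p))) = rsum L (fun j => sin (a + 2 * INR j * p)).
Proof. rewrite csum_snd. reflexivity. Qed.

Lemma sqr_le1 u : 0 <= u -> u * u <= 1 -> u <= 1.
Proof. intros; nra. Qed.

Lemma geo_bound a p L : Cmod (csum L (fun j => cis (a + 2 * INR j * p))) * Rabs (sin p) <= 1.
Proof. set (S := csum L _). destruct S as [X Y] eqn:HS.
 assert (HX : 2 * sin p * X = sin (a + (2 * INR L - 1) * p) - sin (a - p)).
 { rewrite <- TC. rewrite <- geo_fst. fold S. rewrite HS. auto. }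
 assert (HY : 2 * sin p * Y = cos (a - p) - cos (a + (2 * INR L - 1) * p)).
 { rewrite <- TS. rewrite <- geo_snd. fold S. rewrite HS. auto. }
 apply sqr_le1. apply Rmult_le_pos; [apply Cmod_ge_0|apply Rabs_pos].
 unfold Cmod; simpl.
 replace (sqrt (X * (X * 1) + Y * (Y * 1)) * Rabs (sin p) * (sqrt (X * (X * 1) + Y * (Y * 1)) * Rabs (sin p)))
   with ((sqrt (X * (X * 1) + Y * (Y * 1)) * sqrt (X * (X * 1) + Y * (Y * 1))) * (Rabs (sin p) * Rabs (sin p))) by ring.
 rewrite sqrt_sqrt by nra. rewrite <- Rabs_mult, Rabs_right by nra.
 pose proof (sin2_cos2 (a + (2 * INR L - 1) * p)). pose proof (sin2_cos2 (a - p)). unfold Rsqr in *.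
 set (s1 := sin (a + (2 * INR L - 1) * p)) in *. set (s2 := sin (a - p)) in *.
 set (c1 := cos (a + (2 * INR L - 1) * p)) in *. set (c2 := cos (a - p)) in *.
 assert ((2 * sin p * X) * (2 * sin p * X) + (2 * sin p * Y) * (2 * sin p * Y) <= 4).
 { rewrite HX, HY. pose proof (Rle_0_sqr (s1 + s2)). pose proof (Rle_0_sqr (c1 + c2)). unfold Rsqr in *. nra. }
 nra. Qed.

Lemma rgeo_bound a p L : Rabs (rsum L (fun j => cos (a + 2 * INR j * p))) * Rabs (sin p) <= 1.
Proof. rewrite <- Rabs_mult. assert (H := TC a p L).
 pose proof (SIN_bound (a + (2 * INR L - 1) * p)). pose proof (SIN_bound (a - p)).
 apply Rabs_le. split; nra. Qed.

Lemma geo_count a p L : Cmod (csum L (fun j => cis (a + 2 * INR j * p))) <= INR L.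
Proof. eapply Rle_trans. apply Cmod_csum. rewrite (rsum_ext _ _ (fun _ => 1)). rewrite rsum_const; lra.
 intros; apply Cmod_cis. Qed.

Lemma rgeo_count a p L : Rabs (rsum L (fun j => cos (a + 2 * INR j * p))) <= INR L.
Proof. induction L; simpl rsum. rewrite Rabs_R0; simpl; lra. rewrite S_INR.
 eapply Rle_trans. apply Rabs_triang. pose proof (COS_bound (a + 2 * INR L * p)). apply Rabs_le in H. lra. Qed.

Lemma geo_zero a p L : sin p <> 0 -> cos (2 * INR L * p) = 1 -> sin (2 * INR L * p) = 0 ->
  csum L (fun j => cis (a + 2 * INR j * p)) = RtoC 0.
Proof. intros H0 H1 H2.
 assert (E : a + (2 * INR L - 1) * p = (a - p) + 2 * INR L * p) by ring.
 apply injective_projections; simpl.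
 - rewrite geo_fst. apply (Rmult_eq_reg_l (2 * sin p)); [|lra]. rewrite TC, E, sin_plus, H1, H2. ring.
 - rewrite geo_snd. apply (Rmult_eq_reg_l (2 * sin p)); [|lra]. rewrite TS, E, cos_plus, H1, H2. ring.
Qed.

Open Scope R_scope.

Definition F (n : nat) (x : R) : R :=
  if Req_EM_T (sin x) 0 then INR n else Rmin (INR n) (/ Rabs (sin x)).

Lemma F_nonneg n x : 0 <= F n x.
Proof. unfold F. pose proof (pos_INR n). destruct Req_EM_T; auto.
 apply Rmin_glb; auto. left; apply Rinv_0_lt_compat, Rabs_pos_lt; auto. Qed.
Lemma F_le_n n x : F n x <= INR n.
Proof. unfold F. destruct Req_EM_T; [lra| apply Rmin_l]. Qed.
Lemma F_le_inv n x : sin x <> 0 -> F n x <= / Rabs (sin x).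
Proof. unfold F. destruct Req_EM_T; [tauto| intros; apply Rmin_r]. Qed.
Lemma F_bound n x K : K <= INR n -> (sin x <> 0 -> K * Rabs (sin x) <= 1) -> K <= F n x.
Proof. intros H1 H2. unfold F. destruct Req_EM_T; auto. apply Rmin_glb; auto.
 specialize (H2 n0). pose proof (Rabs_pos_lt _ n0).
 apply (Rmult_le_reg_r (Rabs (sin x))); auto. rewrite Rinv_l; lra. Qed.
Lemma F_per n x : F n (x + PI) = F n x.
Proof. unfold F. rewrite neg_sin, Rabs_Ropp. destruct (Req_EM_T (- sin x) 0), (Req_EM_T (sin x) 0); auto; lra. Qed.
Lemma F_neg n x : F n (- x) = F n x.
Proof. unfold F. rewrite sin_neg, Rabs_Ropp. destruct (Req_EM_T (- sin x) 0), (Req_EM_T (sin x) 0); auto; lra. Qed.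
Lemma F_mono n m x : (n <= m)%nat -> F n x <= F m x.
Proof. intros H. apply le_INR in H. unfold F. destruct Req_EM_T; auto.
 apply Rmin_glb. eapply Rle_trans; [apply Rmin_l| lra]. apply Rmin_r. Qed.

Lemma sinlb (a:R) : 0 <= a <= 2 -> a/4 <= a - a^3/6 + a^5/120 - a^7/5040.
Proof. intros [H1 H2].
assert (Hy: a^2 <= 4) by nra.
assert (0 <= a^2) by nra.
assert (E: a - a^3/6 + a^5/120 - a^7/5040 - a/4 = a * (3/4 - (a^2)/6 + (a^2)^2/120 - (a^2)^3/5040)) by field.
assert (0 <= (3/4 - (a^2)/6 + (a^2)^2/120 - (a^2)^3/5040)).
{ set (y:= a^2) in *. nra. }
nra.
Qed.
Lemma sin_lb4 y : 0 <= y <= PI/2 -> y/4 <= sin y.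
Proof. intros [H1 H2]. pose proof PI_4. pose proof PI2_Rlt_PI.
 destruct (SIN y H1 ltac:(lra)) as [Hs _]. eapply Rle_trans; [|apply Hs]. unfold sin_lb, sin_approx, sin_term.
 simpl. match goal with |- _ <= ?r => replace r with (y - y^3/6 + y^5/120 - y^7/5040) by (simpl; field) end.
 apply sinlb. lra. Qed.

Lemma ln_ge y : 0 < y -> 1 - / y <= ln y.
Proof. intros Hy. pose proof (exp_ineq1_le (- ln y)). rewrite exp_Ropp, exp_ln in H by auto. lra. Qed.

Definition h0 (i : nat) : R := if Nat.eqb i 0 then 1 else / INR i.
Lemma h0_nonneg i : 0 <= h0 i.
Proof. unfold h0. destruct (Nat.eqb_spec i 0). lra. left; apply Rinv_0_lt_compat, lt_0_INR; lia. Qed.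

Lemma harm n : rsum (n + 2) h0 <= 2 + ln (INR n + 1).
Proof. induction n.
 - simpl. unfold h0; simpl. rewrite Rplus_0_l, ln_1. lra.
 - replace (S n + 2)%nat with (S (n + 2)) by lia. simpl rsum.
   unfold h0 at 2. destruct (Nat.eqb_spec (n+2) 0); [lia|].
   rewrite S_INR. pose proof (pos_INR n).
   assert (INR (n + 2) = INR n + 2) by (rewrite plus_INR; simpl; lra). rewrite H0.
   pose proof (ln_ge ((INR n + 1 + 1) / (INR n + 1)) ltac:(apply Rdiv_lt_0_compat; lra)).
   rewrite ln_div in H1 by lra.
   replace (1 - / ((INR n + 1 + 1) / (INR n + 1))) with (/ (INR n + 2)) in H1 by (field; lra). lra. Qed.

Lemma harm' n : (1 <= n)%nat -> rsum n h0 <= 2 + ln (INR n).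
Proof. intros H. destruct n; [lia|]. destruct n.
 - simpl; unfold h0; simpl. rewrite ln_1; lra.
 - replace (S (S n)) with (n + 2)%nat by lia. eapply Rle_trans. apply harm.
   rewrite plus_INR. simpl. assert (0 <= INR n) by apply pos_INR.
   apply Rplus_le_compat_l. apply Rlt_le, ln_increasing; lra. Qed.

Definition S1 n a := rsum n (fun j => F n (a + INR j * PI / INR n)).

Lemma S1_shift n a : (1 <= n)%nat -> S1 n (a + PI / INR n) = S1 n a.
Proof. intros Hn. unfold S1. destruct n; [lia|].
 rewrite (rsum_shift n (fun j => F (S n) (a + INR j * PI / INR (S n)))). rewrite rsum_S.
 assert (HP : 0 < INR (S n)) by (apply lt_0_INR; lia).
 replace (a + PI / INR (S n) + INR n * PI / INR (S n)) with (a + PI) by (rewrite S_INR in *; field; lra).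
 rewrite F_per. replace (a + INR 0 * PI / INR (S n)) with a by (change (INR 0) with 0; field; lra).
 rewrite (rsum_ext n (fun j => F (S n) (a + PI / INR (S n) + INR j * PI / INR (S n))) (fun k => F (S n) (a + INR (S k) * PI / INR (S n)))).
 lra. intros k _. apply f_equal. rewrite (S_INR k). field. lra. Qed.

Lemma S1_shiftN n a k : (1 <= n)%nat -> S1 n (a + INR k * PI / INR n) = S1 n a.
Proof. intros Hn. assert (HP : 0 < INR n) by (apply lt_0_INR; lia). induction k.
 - apply f_equal. change (INR 0) with 0. field; lra.
 - rewrite <- IHk, <- (S1_shift n (a + INR k * PI / INR n)) by auto. apply f_equal. rewrite (S_INR k); field; lra. Qed.

Lemma S1_shiftZ n a z : (1 <= n)%nat -> S1 n (a + IZR z * PI / INR n) = S1 n a.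
Proof. intros Hn. assert (HP : 0 < INR n) by (apply lt_0_INR; lia). destruct (Z_le_gt_dec 0 z).
 - rewrite <- (Z2Nat.id z) by lia. rewrite <- INR_IZR_INZ. apply S1_shiftN; auto.
 - rewrite <- (S1_shiftN n (a + IZR z * PI / INR n) (Z.to_nat (- z))) by auto.
   apply f_equal. rewrite (INR_IZR_INZ (Z.to_nat (- z))), Z2Nat.id by lia. rewrite opp_IZR. field; lra. Qed.

Lemma core_term n a j : (1 <= n)%nat -> (j < n)%nat -> 0 <= a < PI / INR n ->
  F n (a + INR j * PI / INR n) <= 2 * INR n * (h0 j + h0 (n - 1 - j)).
Proof. intros Hn Hj Ha. assert (HP : 0 < INR n) by (apply lt_0_INR; lia).
 pose proof PI2_3_2. pose proof (h0_nonneg j). pose proof (h0_nonneg (n - 1 - j)).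
 set (x := a + INR j * PI / INR n).
 assert (Hx1 : INR j * PI / INR n <= x) by (unfold x; lra).
 assert (Hx2 : x < (INR j + 1) * PI / INR n) by (unfold x; unfold Rdiv in *; nra).
 assert (Hjn : INR j + 1 <= INR n) by (rewrite <- S_INR; apply le_INR; lia).
 assert (Hx3 : x < PI).
 { apply (Rlt_le_trans _ _ _ Hx2). apply (Rmult_le_reg_r (INR n)); auto. unfold Rdiv. rewrite Rmult_assoc, Rinv_l by lra. nra. }
 assert (Hx0 : 0 <= x) by (pose proof (pos_INR j); unfold x; unfold Rdiv in *; assert (0 <= INR j * PI * / INR n) by (apply Rmult_le_pos; [nra| left; apply Rinv_0_lt_compat; lra]); lra).
 destruct (Rle_lt_dec x (PI/2)) as [Hle|Hgt].
 - destruct (Nat.eq_dec j 0) as [->|Hj0].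
   + unfold h0 at 1; simpl. pose proof (F_le_n n x). nra.
   + assert (HJ : 1 <= INR j) by (apply (le_INR 1); lia).
     assert (Hs : INR j / (2 * INR n) <= sin x).
     { eapply Rle_trans; [|apply sin_lb4; lra]. apply (Rmult_le_reg_r (4 * INR n)); [lra|].
       unfold Rdiv. field_simplify; try lra. unfold Rdiv in Hx1. 
       apply (Rmult_le_compat_r (4 * INR n)) in Hx1; [|lra]. field_simplify in Hx1; try lra. nra. }
     assert (Hs0 : 0 < sin x) by (apply Rlt_le_trans with (2 := Hs); apply Rdiv_lt_0_compat; lra).
     eapply Rle_trans. apply F_le_inv; lra. rewrite Rabs_right by lra.
     unfold h0 at 1. destruct (Nat.eqb_spec j 0); [lia|].
     apply Rle_trans with (2 * INR n * / INR j).
     { rewrite <- (Rinv_inv (2 * INR n * / INR j)). apply Rinv_le_contravar.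
       apply Rinv_0_lt_compat; apply Rmult_lt_0_compat; [lra| apply Rinv_0_lt_compat; lra].
       rewrite Rinv_mult, Rinv_inv. unfold Rdiv in Hs. rewrite Rinv_mult in Hs. rewrite Rinv_mult. lra. }
     nra.
 - set (y := PI - x).
   assert (Hy : sin x = sin y) by (unfold y; rewrite sin_PI_x; auto).
   destruct (Nat.eq_dec j (n - 1)) as [->|Hj0].
   + replace (n - 1 - (n - 1))%nat with 0%nat by lia. unfold h0 at 2; simpl. pose proof (F_le_n n x). nra.
   + assert (HJ : 1 <= INR (n - 1 - j)) by (apply (le_INR 1); lia).
     assert (HJ' : INR (n - 1 - j) = INR n - 1 - INR j) by (rewrite !minus_INR by lia; simpl; lra).
     assert (Hy1 : INR (n - 1 - j) * PI / INR n < y).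
     { unfold y. rewrite HJ'. apply (Rmult_lt_reg_r (INR n)); auto. unfold Rdiv in *.
       apply (Rmult_lt_compat_r (INR n)) in Hx2; auto. rewrite Rmult_assoc, Rinv_l in * by lra. nra. }
     assert (Hs : INR (n - 1 - j) / (2 * INR n) <= sin x).
     { rewrite Hy. eapply Rle_trans; [|apply sin_lb4; unfold y; lra]. apply (Rmult_le_reg_r (4 * INR n)); [lra|].
       unfold Rdiv. field_simplify; try lra. unfold Rdiv in Hy1. apply Rlt_le in Hy1.
       apply (Rmult_le_compat_r (4 * INR n)) in Hy1; [|lra]. field_simplify in Hy1; try lra. nra. }
     assert (Hs0 : 0 < sin x) by (apply Rlt_le_trans with (2 := Hs); apply Rdiv_lt_0_compat; lra).
     eapply Rle_trans. apply F_le_inv; lra. rewrite Rabs_right by lra.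
     unfold h0 at 2. destruct (Nat.eqb_spec (n - 1 - j) 0); [lia|].
     apply Rle_trans with (2 * INR n * / INR (n - 1 - j)).
     { rewrite <- (Rinv_inv (2 * INR n * / INR (n - 1 - j))). apply Rinv_le_contravar.
       apply Rinv_0_lt_compat; apply Rmult_lt_0_compat; [lra| apply Rinv_0_lt_compat; lra].
       rewrite Rinv_mult, Rinv_inv. unfold Rdiv in Hs. rewrite Rinv_mult in Hs. rewrite Rinv_mult. lra. }
     nra.
Qed.

Lemma Sum1D n a : (1 <= n)%nat -> S1 n a <= INR n * (8 + 4 * ln (INR n)).
Proof. intros Hn. assert (HP : 0 < INR n) by (apply lt_0_INR; lia). pose proof PI_RGT_0.
 set (u := a * INR n / PI). set (z := (1 - up u)%Z).
 rewrite <- (S1_shiftZ n a z) by auto.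
 destruct (archimed u) as [Hu1 Hu2].
 assert (Ea : a + IZR z * PI / INR n = (u + 1 - IZR (up u)) * PI / INR n).
 { unfold z, u. rewrite minus_IZR. field; lra. }
 assert (Ha : 0 <= a + IZR z * PI / INR n < PI / INR n).
 { rewrite Ea. split. apply Rmult_le_pos. apply Rmult_le_pos; lra. left; apply Rinv_0_lt_compat; lra.
   unfold Rdiv. apply Rmult_lt_compat_r. apply Rinv_0_lt_compat; lra. nra. }
 unfold S1. eapply Rle_trans.
 { apply rsum_le. intros j Hj. apply core_term; auto. }
 rewrite rsum_scal, rsum_plus.
 rewrite (rsum_rev n h0). pose proof (harm' n Hn). nra. Qed.

Open Scope R_scope.

Definition tn (M i : nat) : R := INR i * PI / (2 * INR M).
Definition qz (N i1 : nat) : Z := (2 - Z.of_nat (i1 mod 2) - 2 * Z.of_nat N)%Z.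
Definition i2z (N i1 j : nat) : Z := (2 * Z.of_nat j + qz N i1)%Z.
Definition thn (N i1 j : nat) : R := IZR (i2z N i1 j) * PI / (2 * INR N).
Definition Lr (M N i1 : nat) : nat := if Nat.eqb i1 M then N else (2 * N)%nat.

Lemma cos2k m : cos (2 * (IZR m * PI)) = 1.
Proof. rewrite cos_2a_sin. rewrite sin_eq_0_1 by eauto. ring. Qed.
Lemma sin2k m : sin (2 * (IZR m * PI)) = 0.
Proof. apply sin_eq_0_1. exists (2 * m)%Z. rewrite mult_IZR. ring. Qed.

Lemma sin_ne0 N d : (1 <= N)%nat -> d <> 0%Z -> (Z.abs d < 2 * Z.of_nat N)%Z -> sin (IZR d * PI / (2 * INR N)) <> 0.
Proof. intros HN Hd Hb Hs. apply sin_eq_0_0 in Hs. destruct Hs as [k Hk].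
 assert (HP : 0 < INR N) by (apply lt_0_INR; lia). pose proof PI_RGT_0.
 assert (IZR d = IZR k * (2 * INR N)).
 { replace (IZR d) with ((IZR d * PI / (2 * INR N)) * (2 * INR N) / PI) by (field; lra). rewrite Hk. field. lra. }
 rewrite INR_IZR_INZ in H0. rewrite <- mult_IZR, <- mult_IZR in H0. apply eq_IZR in H0. subst d. destruct (Z.lt_trichotomy k 0) as [Hk0|[Hk0|Hk0]]; [| subst; lia |]; rewrite Z.abs_mul in Hb; rewrite (Z.abs_eq (2 * Z.of_nat N)) in Hb by lia; nia. Qed.

Lemma thn_split N i1 j d : IZR d * thn N i1 j =
  IZR d * IZR (qz N i1) * PI / (2 * INR N) + 2 * INR j * (IZR d * PI / (2 * INR N)).
Proof. unfold thn, i2z. rewrite plus_IZR, mult_IZR, <- INR_IZR_INZ. unfold Rdiv. ring. Qed.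

Open Scope C_scope.
Lemma row0 M N i1 : csum (Lr M N i1) (fun j => cis (IZR 0 * thn N i1 j)) = RtoC (INR (Lr M N i1)).
Proof. rewrite (csum_ext _ _ (fun _ => RtoC 1)). rewrite csum_RtoC, rsum_const. f_equal. ring.
 intros; unfold cis. rewrite Rmult_0_l, cos_0, sin_0. auto. Qed.

Lemma rowz M N i1 d : (1 <= N)%nat -> d <> 0%Z -> (Z.abs d < 2 * Z.of_nat N)%Z -> (i1 = M -> Z.Even d) ->
  csum (Lr M N i1) (fun j => cis (IZR d * thn N i1 j)) = RtoC 0.
Proof. intros HN Hd Hb He.
 assert (HP : (0 < INR N)%R) by (apply lt_0_INR; lia).
 rewrite (csum_ext _ _ (fun j => cis (IZR d * IZR (qz N i1) * PI / (2 * INR N) + 2 * INR j * (IZR d * PI / (2 * INR N))))) by (intros; rewrite thn_split; auto).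
 apply geo_zero. apply sin_ne0; auto.
 - unfold Lr. destruct (Nat.eqb_spec i1 M).
   + destruct (He e) as [m ->]. replace (2 * INR N * (IZR (2 * m) * PI / (2 * INR N)))%R with (2 * (IZR m * PI))%R.
     apply cos2k. rewrite mult_IZR. field. lra.
   + replace (2 * INR (2 * N) * (IZR d * PI / (2 * INR N)))%R with (2 * (IZR d * PI))%R. apply cos2k.
     rewrite mult_INR. simpl INR. field. lra.
 - unfold Lr. destruct (Nat.eqb_spec i1 M).
   + destruct (He e) as [m ->]. replace (2 * INR N * (IZR (2 * m) * PI / (2 * INR N)))%R with (2 * (IZR m * PI))%R.
     apply sin2k. rewrite mult_IZR. field. lra.
   + replace (2 * INR (2 * N) * (IZR d * PI / (2 * INR N)))%R with (2 * (IZR d * PI))%R. apply sin2k.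
     rewrite mult_INR. simpl INR. field. lra.
Qed.

Open Scope R_scope.

Definition Gk (N : nat) (c0 : Z) (p : R) : C := csum N (fun k => cis (IZR c0 * p + 2 * INR k * p)).

Open Scope C_scope.
Lemma thetaG_swap M N i1 c0 g2 th :
  csum (Lr M N i1) (fun j => cis (IZR g2 * thn N i1 j) * Gk N c0 (th - thn N i1 j)) =
  csum N (fun k => cis ((IZR c0 + 2 * INR k) * th) *
     csum (Lr M N i1) (fun j => cis (IZR (g2 - c0 - 2 * Z.of_nat k) * thn N i1 j))).
Proof. unfold Gk. rewrite (csum_ext _ _ (fun j => csum N (fun k => cis (IZR g2 * thn N i1 j) * cis (IZR c0 * (th - thn N i1 j) + 2 * INR k * (th - thn N i1 j))))).
 2:{ intros; rewrite csum_scal; auto. }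
 rewrite csum_swap. apply csum_ext. intros k _. rewrite <- csum_scal. apply csum_ext. intros j _.
 rewrite <- !cis_add. f_equal. rewrite !minus_IZR, mult_IZR, <- INR_IZR_INZ. ring. Qed.

Lemma thetaG_even M N i1 c0 g2 th : (1 <= N)%nat -> (- Z.of_nat N < c0 <= 2 - Z.of_nat N)%Z ->
  (- Z.of_nat N < g2 <= Z.of_nat N)%Z -> Z.Even (g2 - c0) ->
  csum (Lr M N i1) (fun j => cis (IZR g2 * thn N i1 j) * Gk N c0 (th - thn N i1 j)) =
  RtoC (INR (Lr M N i1)) * cis (IZR g2 * th).
Proof. intros HN Hc Hg [m Hm]. rewrite thetaG_swap.
 assert (Hm0 : (0 <= m < Z.of_nat N)%Z) by lia.
 erewrite (csum_single N _ (Z.to_nat m)).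
 2: lia.
 2:{ intros k Hk Hne. rewrite rowz. ring. lia. lia. lia. intros _; exists (m - Z.of_nat k)%Z; lia. }
 replace (g2 - c0 - 2 * Z.of_nat (Z.to_nat m))%Z with 0%Z by lia. rewrite row0.
 replace ((IZR c0 + 2 * INR (Z.to_nat m)) * th)%R with (IZR g2 * th)%R. ring.
 rewrite INR_IZR_INZ, Z2Nat.id by lia. replace g2 with (c0 + 2 * m)%Z by lia. rewrite plus_IZR, mult_IZR. ring. Qed.

Lemma thetaG_odd M N i1 c0 g2 th : (1 <= N)%nat -> (- Z.of_nat N < c0 <= 2 - Z.of_nat N)%Z ->
  (- Z.of_nat N < g2 <= Z.of_nat N)%Z -> ~ Z.Even (g2 - c0) -> i1 <> M ->
  csum (Lr M N i1) (fun j => cis (IZR g2 * thn N i1 j) * Gk N c0 (th - thn N i1 j)) = RtoC 0.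
Proof. intros HN Hc Hg Ho Hi. rewrite thetaG_swap. apply csum_zero. intros k Hk.
 assert (Hne : (g2 - c0 - 2 * Z.of_nat k <> 0)%Z) by (intros E; apply Ho; exists (Z.of_nat k); lia).
 rewrite rowz; [ring| lia | lia | lia | tauto]. Qed.

Open Scope R_scope.

Definition w (M i : nat) : R := if Nat.eqb i 0 then / 2 else if Nat.eqb i M then / 2 else 1.
Definition nk (M k : nat) : R := if (Nat.eqb k 0 || Nat.eqb k (2 * M))%bool then INR M else INR M / 2.

Lemma Wsum M X : (1 <= M)%nat -> rsum (S M) (fun i => w M i * X i) = / 2 * rsum M X + / 2 * rsum M (fun i => X (S i)).
Proof. intros HM. destruct M as [|M']; [lia|].
 rewrite rsum_S, rsum_shift. rewrite (rsum_S M' (fun i => X (S i))). rewrite (rsum_shift M' X).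
 rewrite (rsum_ext M' (fun k => w (S M') (S k) * X (S k)) (fun k => X (S k))).
 2:{ intros k Hk. unfold w. destruct (Nat.eqb_spec (S k) 0); [lia|]. destruct (Nat.eqb_spec (S k) (S M')); [lia|]. ring. }
 unfold w. simpl Nat.eqb. rewrite Nat.eqb_refl. lra. Qed.

Definition Sfun M u := rsum (S M) (fun i => w M i * cos (IZR u * tn M i)).

Lemma Sfun_full M z : (1 <= M)%nat -> Sfun M (4 * Z.of_nat M * z) = INR M.
Proof. intros HM. assert (HP : 0 < INR M) by (apply lt_0_INR; lia). unfold Sfun.
 rewrite (rsum_ext _ _ (fun i => w M i * 1)).
 2:{ intros i _. f_equal. replace (IZR (4 * Z.of_nat M * z) * tn M i) with (2 * (IZR (z * Z.of_nat i) * PI)).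
     apply cos2k. unfold tn. rewrite !mult_IZR, <- !INR_IZR_INZ. field. lra. }
 rewrite Wsum, !rsum_const by auto. lra. Qed.

Lemma Sfun_zero M u : (1 <= M)%nat -> Z.Even u -> sin (IZR u * PI / (4 * INR M)) <> 0 -> Sfun M u = 0.
Proof. intros HM [v Hv] Hs. assert (HP : 0 < INR M) by (apply lt_0_INR; lia). unfold Sfun.
 set (p := IZR u * PI / (4 * INR M)) in *.
 rewrite Wsum by auto.
 rewrite (rsum_ext M _ (fun i => cos (0 + 2 * INR i * p))) by (intros; f_equal; unfold p, tn; field; lra).
 rewrite (rsum_ext M (fun i => cos (IZR u * tn M (S i))) (fun i => cos (2 * p + 2 * INR i * p))) by (intros; f_equal; unfold p, tn; rewrite S_INR; field; lra).
 apply (Rmult_eq_reg_l (2 * sin p)); [|lra].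
 rewrite Rmult_plus_distr_l. 
 replace (2 * sin p * (/ 2 * rsum M (fun i => cos (0 + 2 * INR i * p)))) with (/2 * (2 * sin p * rsum M (fun i => cos (0 + 2 * INR i * p)))) by ring.
 replace (2 * sin p * (/ 2 * rsum M (fun i => cos (2 * p + 2 * INR i * p)))) with (/2 * (2 * sin p * rsum M (fun i => cos (2 * p + 2 * INR i * p)))) by ring.
 rewrite !TC. 
 replace (0 + (2 * INR M - 1) * p) with (2 * INR M * p - p) by ring.
 replace (2 * p + (2 * INR M - 1) * p) with (2 * INR M * p + p) by ring.
 replace (0 - p) with (- p) by ring. replace (2 * p - p) with p by ring.
 rewrite sin_minus, sin_plus, sin_neg.
 replace (sin (2 * INR M * p)) with 0. ring.
 symmetry. apply sin_eq_0_1. exists v. unfold p. rewrite Hv, mult_IZR. field. lra. Qed.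

Lemma sin_ne0' M d : (1 <= M)%nat -> d <> 0%Z -> (Z.abs d < 4 * Z.of_nat M)%Z -> sin (IZR d * PI / (4 * INR M)) <> 0.
Proof. intros. replace (4 * INR M) with (2 * INR (2 * M)) by (rewrite mult_INR; simpl; ring).
 apply sin_ne0; lia. Qed.

Lemma orth M g k : (1 <= M)%nat -> (g <= 2 * M)%nat -> (k <= 2 * M)%nat -> Z.Even (Z.of_nat g - Z.of_nat k) ->
  rsum (S M) (fun i => w M i * (cos (INR g * tn M i) * cos (INR k * tn M i))) = if Nat.eqb g k then nk M k else 0.
Proof. intros HM Hg Hk He.
 rewrite (rsum_ext _ _ (fun i => / 2 * (w M i * cos (IZR (Z.of_nat g - Z.of_nat k) * tn M i)) + / 2 * (w M i * cos (IZR (Z.of_nat g + Z.of_nat k) * tn M i)))).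
 2:{ intros i _. rewrite minus_IZR, plus_IZR, <- !INR_IZR_INZ.
     rewrite Rmult_minus_distr_r, Rmult_plus_distr_r, cos_minus, cos_plus. field. }
 rewrite rsum_plus, !rsum_scal. fold (Sfun M (Z.of_nat g - Z.of_nat k)). fold (Sfun M (Z.of_nat g + Z.of_nat k)).
 assert (Hev : Z.Even (Z.of_nat g + Z.of_nat k)) by (destruct He as [m Hm]; exists (m + Z.of_nat k)%Z; lia).
 destruct (Nat.eqb_spec g k) as [<-|Hne].
 - replace (Z.of_nat g - Z.of_nat g)%Z with (4 * Z.of_nat M * 0)%Z by lia. rewrite Sfun_full by auto.
   unfold nk. destruct (Nat.eqb_spec g 0) as [->|H0]; rewrite ?Bool.orb_false_l, ?Bool.orb_true_l.
   + replace (Z.of_nat 0 + Z.of_nat 0)%Z with (4 * Z.of_nat M * 0)%Z by lia. rewrite Sfun_full by auto. lra.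
   + destruct (Nat.eqb_spec g (2 * M)) as [->|H1].
     * replace (Z.of_nat (2 * M) + Z.of_nat (2 * M))%Z with (4 * Z.of_nat M * 1)%Z by lia. rewrite Sfun_full by auto. lra.
     * rewrite Sfun_zero; auto. lra. apply sin_ne0'; lia.
 - rewrite Sfun_zero, (Sfun_zero M (Z.of_nat g + Z.of_nat k)); auto. lra.
   apply sin_ne0'; lia. apply sin_ne0'; lia. Qed.

Open Scope R_scope.

Definition Ce M t s := 2 / INR M * rsum (S M) (fun k => w M k * (cos (INR (2 * k) * t) * cos (INR (2 * k) * s))).
Definition Co M t s := 2 / INR M * rsum M (fun k => cos (INR (2 * k + 1) * t) * cos (INR (2 * k + 1) * s)).

Lemma reprE M g t : (1 <= M)%nat -> (g <= 2 * M)%nat -> Nat.Even g ->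
  rsum (S M) (fun i => w M i * cos (INR g * tn M i) * Ce M t (tn M i)) = cos (INR g * t).
Proof. intros HM Hg [m Hm]. assert (HP : 0 < INR M) by (apply lt_0_INR; lia).
 unfold Ce.
 rewrite (rsum_ext _ _ (fun i => 2 / INR M * rsum (S M) (fun k => w M k * cos (INR (2 * k) * t) * (w M i * (cos (INR g * tn M i) * cos (INR (2 * k) * tn M i)))))).
 2:{ intros i _. rewrite rsum_pull. apply f_equal, rsum_ext. intros; ring. }
 rewrite rsum_scal, rsum_swap.
 rewrite (rsum_ext _ _ (fun k => w M k * cos (INR (2 * k) * t) * (if Nat.eqb g (2 * k) then nk M (2 * k) else 0))).
 2:{ intros k Hk. rewrite rsum_scal. rewrite orth; auto. lia. exists (Z.of_nat m - Z.of_nat k)%Z. lia. }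
 rewrite (rsum_single _ _ m). 2: lia.
 2:{ intros k Hk Hne. destruct (Nat.eqb_spec g (2 * k)). lia. ring. }
 subst g. rewrite Nat.eqb_refl. unfold w, nk.
 destruct (Nat.eqb_spec m 0) as [->|H0].
 - simpl. field. lra.
 - destruct (Nat.eqb_spec m M) as [->|H1].
   + rewrite Nat.eqb_refl. destruct (Nat.eqb_spec (2 * M) 0); [lia|]. rewrite ?Bool.orb_false_l, ?Bool.orb_true_l, ?Bool.orb_true_r. cbv iota. field. lra.
   + destruct (Nat.eqb_spec (2 * m) 0); [lia|]. destruct (Nat.eqb_spec (2 * m) (2 * M)); [lia|]. rewrite ?Bool.orb_false_l, ?Bool.orb_true_l, ?Bool.orb_true_r. cbv iota. field. lra.
Qed.

Lemma reprO M g t : (1 <= M)%nat -> (g <= 2 * M)%nat -> Nat.Odd g ->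
  rsum (S M) (fun i => w M i * cos (INR g * tn M i) * Co M t (tn M i)) = cos (INR g * t).
Proof. intros HM Hg [m Hm]. assert (HP : 0 < INR M) by (apply lt_0_INR; lia).
 unfold Co.
 rewrite (rsum_ext _ _ (fun i => 2 / INR M * rsum M (fun k => cos (INR (2 * k + 1) * t) * (w M i * (cos (INR g * tn M i) * cos (INR (2 * k + 1) * tn M i)))))).
 2:{ intros i _. rewrite rsum_pull. apply f_equal, rsum_ext. intros; ring. }
 rewrite rsum_scal, rsum_swap.
 rewrite (rsum_ext _ _ (fun k => cos (INR (2 * k + 1) * t) * (if Nat.eqb g (2 * k + 1) then nk M (2 * k + 1) else 0))).
 2:{ intros k Hk. rewrite rsum_scal. rewrite orth; auto. lia. exists (Z.of_nat m - Z.of_nat k)%Z. lia. }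
 rewrite (rsum_single _ _ m). 2: lia.
 2:{ intros k Hk Hne. destruct (Nat.eqb_spec g (2 * k + 1)). lia. ring. }
 subst g. rewrite Nat.eqb_refl. unfold nk.
 destruct (Nat.eqb_spec (2 * m + 1) 0); [lia|]. destruct (Nat.eqb_spec (2 * m + 1) (2 * M)); [lia|]. rewrite ?Bool.orb_false_l, ?Bool.orb_true_l, ?Bool.orb_true_r. cbv iota. field. lra.
Qed.

Lemma tnM M : (1 <= M)%nat -> tn M M = PI / 2.
Proof. intros. unfold tn. field. apply not_0_INR. lia. Qed.

Lemma cos_odd_half m : cos (INR (2 * m + 1) * (PI / 2)) = 0.
Proof. replace (INR (2 * m + 1) * (PI / 2)) with (IZR (Z.of_nat m) * PI + PI / 2).
 rewrite cos_plus, cos_PI2, sin_PI2. rewrite sin_eq_0_1 by eauto. ring.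
 rewrite <- INR_IZR_INZ, plus_INR, mult_INR. simpl. field. Qed.

Lemma Co_half M t : (1 <= M)%nat -> Co M t (tn M M) = 0.
Proof. intros HM. unfold Co. rewrite tnM by auto. rewrite rsum_zero. ring.
 intros k _. rewrite cos_odd_half. ring. Qed.

Lemma cos_odd_half' M g : (1 <= M)%nat -> Nat.Odd g -> cos (INR g * tn M M) = 0.
Proof. intros HM [m ->]. rewrite tnM by auto. apply cos_odd_half. Qed.

Open Scope R_scope.

Definition cn (N i1 : nat) : R := if Nat.eqb i1 0 then / (4 * INR N) else / (2 * INR N).
Definition e0 (N : nat) : Z := (2 - Z.of_nat N - Z.of_nat (N mod 2))%Z.
Definition o0 (N : nat) : Z := (1 - Z.of_nat N + Z.of_nat (N mod 2))%Z.

Definition Kn M N i1 j t th : C :=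
  Cmult (RtoC (cn N i1)) (Cplus (Cmult (RtoC (Ce M t (tn M i1))) (Gk N (e0 N) (th - thn N i1 j)))
                                 (Cmult (RtoC (Co M t (tn M i1))) (Gk N (o0 N) (th - thn N i1 j)))).

Lemma Ndiv N : (Z.of_nat N = 2 * Z.of_nat (N / 2) + Z.of_nat (N mod 2) /\ Z.of_nat (N mod 2) < 2)%Z.
Proof. pose proof (Nat.div_mod N 2 ltac:(lia)). pose proof (Nat.mod_upper_bound N 2 ltac:(lia)). lia. Qed.

Lemma e0_range N : (- Z.of_nat N < e0 N <= 2 - Z.of_nat N)%Z.
Proof. unfold e0. pose proof (Ndiv N). lia. Qed.
Lemma o0_range N : (- Z.of_nat N < o0 N <= 2 - Z.of_nat N)%Z.
Proof. unfold o0. pose proof (Ndiv N). lia. Qed.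

Lemma cnL M N i1 : (1 <= M)%nat -> (1 <= N)%nat -> (i1 <= M)%nat -> cn N i1 * INR (Lr M N i1) = w M i1.
Proof. intros HM HN Hi. assert (0 < INR N) by (apply lt_0_INR; lia). unfold cn, Lr, w.
 destruct (Nat.eqb_spec i1 0) as [->|H0].
 - destruct (Nat.eqb_spec 0 M); [lia|]. rewrite mult_INR. simpl. field. lra.
 - destruct (Nat.eqb_spec i1 M). field; lra. rewrite mult_INR. simpl. field. lra. Qed.

Open Scope C_scope.
Lemma row_expand M N i1 g1 g2 t th :
  csum (Lr M N i1) (fun j => RtoC (cos (INR g1 * tn M i1)) * cis (IZR g2 * thn N i1 j) * Kn M N i1 j t th) =
  RtoC (cos (INR g1 * tn M i1) * cn N i1) *
   (RtoC (Ce M t (tn M i1)) * csum (Lr M N i1) (fun j => cis (IZR g2 * thn N i1 j) * Gk N (e0 N) (th - thn N i1 j)) +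
    RtoC (Co M t (tn M i1)) * csum (Lr M N i1) (fun j => cis (IZR g2 * thn N i1 j) * Gk N (o0 N) (th - thn N i1 j))).
Proof. rewrite <- !csum_scal, <- csum_plus, <- csum_scal. apply csum_ext. intros j _. unfold Kn.
 rewrite RtoC_mult. ring. Qed.

Lemma repro M N g1 g2 t th : (1 <= M)%nat -> (1 <= N)%nat -> (g1 <= 2 * M)%nat ->
  (- Z.of_nat N < g2 <= Z.of_nat N)%Z -> Z.even (Z.of_nat g1 + g2) = true ->
  csum (S M) (fun i1 => csum (Lr M N i1) (fun j => RtoC (cos (INR g1 * tn M i1)) * cis (IZR g2 * thn N i1 j) * Kn M N i1 j t th))
  = RtoC (cos (INR g1 * t)) * cis (IZR g2 * th).
Proof. intros HM HN Hg1 Hg2 Hev. apply Z.even_spec in Hev. destruct Hev as [s Hs].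
 pose proof (Ndiv N) as HD. pose proof (e0_range N). pose proof (o0_range N).
 destruct (Nat.Even_or_Odd g1) as [[m Hm]|[m Hm]].
 - rewrite (csum_ext _ _ (fun i1 => RtoC (w M i1 * cos (INR g1 * tn M i1) * Ce M t (tn M i1)) * cis (IZR g2 * th))).
   + rewrite csum_scal_r, csum_RtoC, reprE; auto. exists m; auto.
   + intros i1 Hi1. rewrite row_expand. rewrite thetaG_even; auto.
     2:{ exists (s - Z.of_nat m - 1 + Z.of_nat (N / 2) + Z.of_nat (N mod 2))%Z. unfold e0. lia. }
     destruct (Nat.eq_dec i1 M) as [->|Hne].
     * rewrite Co_half by auto. rewrite <- (cnL M N M) by lia. rewrite !RtoC_mult. ring.
     * rewrite thetaG_odd; auto. rewrite <- (cnL M N i1) by lia. rewrite !RtoC_mult. ring.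
       intros [x Hx]. unfold o0 in Hx. lia.
 - rewrite (csum_ext _ _ (fun i1 => RtoC (w M i1 * cos (INR g1 * tn M i1) * Co M t (tn M i1)) * cis (IZR g2 * th))).
   + rewrite csum_scal_r, csum_RtoC, reprO; auto. exists m; auto.
   + intros i1 Hi1. rewrite row_expand.
     destruct (Nat.eq_dec i1 M) as [->|Hne].
     * rewrite cos_odd_half' by (auto; exists m; auto). rewrite Rmult_0_r, !Rmult_0_l. ring.
     * rewrite thetaG_odd; auto. rewrite thetaG_even; auto. rewrite <- (cnL M N i1) by lia. rewrite !RtoC_mult. ring.
       exists (s - Z.of_nat m - 1 + Z.of_nat (N / 2))%Z. unfold o0. lia.
       intros [x Hx]. unfold e0 in Hx. lia.
Qed.

Open Scope R_scope.

Lemma Gk_bound N c0 p : Cmod (Gk N c0 p) <= F N p.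
Proof. apply F_bound. apply geo_count. intros _. apply geo_bound. Qed.

Definition Dy M y := rsum (S M) (fun k => w M k * cos (INR (2 * k) * y)).
Definition Do M y := rsum M (fun k => cos (INR (2 * k + 1) * y)).

Lemma Dy_bound M y : (1 <= M)%nat -> Rabs (Dy M y) <= F (2 * M) y.
Proof. intros HM. unfold Dy. rewrite Wsum by auto.
 rewrite (rsum_ext M (fun k => cos (INR (2 * k) * y)) (fun k => cos (0 + 2 * INR k * y))) by (intros; f_equal; rewrite mult_INR; change (INR 2) with 2; ring).
 rewrite (rsum_ext M (fun k => cos (INR (2 * S k) * y)) (fun k => cos (2 * y + 2 * INR k * y))) by (intros; f_equal; rewrite mult_INR, (S_INR k); change (INR 2) with 2; ring).
 pose proof (rgeo_count 0 y M). pose proof (rgeo_count (2 * y) y M).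
 pose proof (rgeo_bound 0 y M). pose proof (rgeo_bound (2 * y) y M).
 set (A := rsum M (fun k => cos (0 + 2 * INR k * y))) in *.
 set (B := rsum M (fun k => cos (2 * y + 2 * INR k * y))) in *.
 apply F_bound.
 - rewrite mult_INR. simpl INR. eapply Rle_trans. apply Rabs_triang. rewrite !Rabs_mult.
   rewrite Rabs_right by lra. pose proof (pos_INR M). lra.
 - intros _. eapply Rle_trans. apply Rmult_le_compat_r. apply Rabs_pos. apply Rabs_triang.
   rewrite !Rabs_mult. rewrite Rabs_right by lra. pose proof (Rabs_pos (sin y)). nra.
Qed.

Lemma Do_bound M y : Rabs (Do M y) <= F (2 * M) y.
Proof. unfold Do.
 rewrite (rsum_ext M _ (fun k => cos (y + 2 * INR k * y))) by (intros; f_equal; rewrite plus_INR, mult_INR; change (INR 2) with 2; change (INR 1) with 1; ring).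
 apply F_bound. eapply Rle_trans. apply rgeo_count. apply le_INR; lia.
 intros _. apply rgeo_bound. Qed.

Lemma Ce_expand M t s : (1 <= M)%nat -> Ce M t s = / INR M * (Dy M (t - s) + Dy M (t + s)).
Proof. intros HM. assert (0 < INR M) by (apply lt_0_INR; lia). unfold Ce, Dy. rewrite <- rsum_plus.
 match goal with |- _ * rsum _ ?f = _ => replace (2 / INR M * rsum (S M) f) with (/ INR M * rsum (S M) (fun k => 2 * f k)) by (rewrite rsum_scal; field; lra) end.
 f_equal. apply rsum_ext. intros k _.
 rewrite Rmult_minus_distr_l, Rmult_plus_distr_l, cos_minus, cos_plus. ring. Qed.

Lemma Co_expand M t s : (1 <= M)%nat -> Co M t s = / INR M * (Do M (t - s) + Do M (t + s)).
Proof. intros HM. assert (0 < INR M) by (apply lt_0_INR; lia). unfold Co, Do. rewrite <- rsum_plus.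
 match goal with |- _ * rsum _ ?f = _ => replace (2 / INR M * rsum M f) with (/ INR M * rsum M (fun k => 2 * f k)) by (rewrite rsum_scal; field; lra) end.
 f_equal. apply rsum_ext. intros k _.
 rewrite Rmult_minus_distr_l, Rmult_plus_distr_l, cos_minus, cos_plus. ring. Qed.

Lemma S1_two n a : (1 <= n)%nat -> rsum (2 * n) (fun j => F n (a + INR j * PI / INR n)) <= 2 * (INR n * (8 + 4 * ln (INR n))).
Proof. intros Hn. assert (0 < INR n) by (apply lt_0_INR; lia).
 replace (2 * n)%nat with (n + n)%nat by lia. rewrite rsum_add.
 rewrite (rsum_ext n (fun k => F n (a + INR (n + k) * PI / INR n)) (fun k => F n ((a + INR k * PI / INR n) + PI))).
 2:{ intros; f_equal. rewrite plus_INR. field. lra. }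
 rewrite (rsum_ext n (fun k => F n ((a + INR k * PI / INR n) + PI)) (fun k => F n (a + INR k * PI / INR n))) by (intros; apply F_per).
 pose proof (Sum1D n a Hn). unfold S1 in H0. lra. Qed.

Lemma sumM_bound M t (G : R -> R) : (1 <= M)%nat -> (forall y, 0 <= G y <= F (2 * M) y) ->
  rsum (S M) (fun i => G (t + tn M i)) <= 2 * INR M * (8 + 4 * ln (INR (2 * M))).
Proof. intros HM HG. eapply Rle_trans with (rsum (2 * M) (fun i => F (2 * M) (t + INR i * PI / INR (2 * M)))).
 - eapply Rle_trans. apply rsum_le. intros i _. apply HG.
   rewrite (rsum_ext _ (fun i => F (2 * M) (t + tn M i)) (fun i => F (2 * M) (t + INR i * PI / INR (2 * M)))).
   apply rsum_mono. lia. intros; apply F_nonneg.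
   intros; unfold tn; rewrite mult_INR; simpl INR; auto.
 - pose proof (Sum1D (2 * M) t ltac:(lia)). unfold S1 in H. rewrite mult_INR in *. simpl INR in *. lra. Qed.

Open Scope R_scope.

Lemma row_bound M N i1 c0 th : (1 <= N)%nat ->
  rsum (Lr M N i1) (fun j => Cmod (Gk N c0 (th - thn N i1 j))) <= 2 * (INR N * (8 + 4 * ln (INR N))).
Proof. intros HN. assert (0 < INR N) by (apply lt_0_INR; lia).
 set (a := IZR (qz N i1) * PI / (2 * INR N) - th).
 eapply Rle_trans. apply rsum_le. intros j _. apply Gk_bound.
 rewrite (rsum_ext _ (fun j => F N (th - thn N i1 j)) (fun j => F N (a + INR j * PI / INR N))).
 2:{ intros j _. rewrite <- F_neg. f_equal. unfold a, thn, i2z. rewrite plus_IZR, mult_IZR, <- INR_IZR_INZ. field. lra. }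
 eapply Rle_trans. apply rsum_mono with (m := (2 * N)%nat). unfold Lr; destruct (Nat.eqb i1 M); lia.
 intros; apply F_nonneg. apply S1_two; auto. Qed.

Lemma Kn_bound M N i1 j t th : Cmod (Kn M N i1 j t th) <=
  / (2 * INR N) * (Rabs (Ce M t (tn M i1)) * Cmod (Gk N (e0 N) (th - thn N i1 j)) + Rabs (Co M t (tn M i1)) * Cmod (Gk N (o0 N) (th - thn N i1 j))).
Proof. destruct (le_lt_dec N 0) as [H0|HN].
 - assert (N = 0%nat) by lia. subst. unfold Gk. simpl csum. rewrite !Cmod_0. unfold Kn. unfold Gk. simpl csum.
   replace (Ce M t (tn M i1) * RtoC 0 + Co M t (tn M i1) * RtoC 0)%C with (RtoC 0) by ring.
   rewrite Cmult_0_r, Cmod_0. lra.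
 - assert (0 < INR N) by (apply lt_0_INR; lia). unfold Kn. rewrite Cmod_mult, Cmod_R.
   assert (Hc : Rabs (cn N i1) <= / (2 * INR N)).
   { unfold cn. destruct (Nat.eqb i1 0); rewrite Rabs_right.
     apply Rinv_le_contravar; lra. left; apply Rinv_0_lt_compat; lra. lra. left; apply Rinv_0_lt_compat; lra. }
   apply Rmult_le_compat; auto. apply Rabs_pos. apply Cmod_ge_0.
   eapply Rle_trans. apply Cmod_triangle. rewrite !Cmod_mult, !Cmod_R. lra. Qed.

Lemma sumCe_bound M t : (1 <= M)%nat -> rsum (S M) (fun i => Rabs (Ce M t (tn M i))) <= 4 * (8 + 4 * ln (INR (2 * M))).
Proof. intros HM. assert (0 < INR M) by (apply lt_0_INR; lia).
 assert (H1 := sumM_bound M (- t) (fun y => Rabs (Dy M (- y))) HM).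
 assert (H2 := sumM_bound M t (fun y => Rabs (Dy M y)) HM).
 assert (H1' : rsum (S M) (fun i => Rabs (Dy M (t - tn M i))) <= 2 * INR M * (8 + 4 * ln (INR (2 * M)))).
 { eapply Rle_trans; [|apply H1]. right. apply rsum_ext. intros; f_equal; f_equal; ring.
   intros y; split. apply Rabs_pos. rewrite <- (F_neg _ y). apply Dy_bound; auto. }
 assert (H2' : rsum (S M) (fun i => Rabs (Dy M (t + tn M i))) <= 2 * INR M * (8 + 4 * ln (INR (2 * M)))).
 { apply H2. intros y; split. apply Rabs_pos. apply Dy_bound; auto. }
 eapply Rle_trans. apply rsum_le. intros i _. rewrite Ce_expand by auto. rewrite Rabs_mult, Rabs_right.
 apply Rmult_le_compat_l. left; apply Rinv_0_lt_compat; lra. apply Rabs_triang. left; apply Rinv_0_lt_compat; lra.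
 rewrite rsum_scal, rsum_plus.
 apply (Rmult_le_reg_l (INR M)); auto. rewrite <- Rmult_assoc, Rinv_r by lra. lra. Qed.

Lemma sumCo_bound M t : (1 <= M)%nat -> rsum (S M) (fun i => Rabs (Co M t (tn M i))) <= 4 * (8 + 4 * ln (INR (2 * M))).
Proof. intros HM. assert (0 < INR M) by (apply lt_0_INR; lia).
 assert (H1 := sumM_bound M (- t) (fun y => Rabs (Do M (- y))) HM).
 assert (H2 := sumM_bound M t (fun y => Rabs (Do M y)) HM).
 assert (H1' : rsum (S M) (fun i => Rabs (Do M (t - tn M i))) <= 2 * INR M * (8 + 4 * ln (INR (2 * M)))).
 { eapply Rle_trans; [|apply H1]. right. apply rsum_ext. intros; f_equal; f_equal; ring.
   intros y; split. apply Rabs_pos. rewrite <- (F_neg _ y). apply Do_bound; auto. }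
 assert (H2' : rsum (S M) (fun i => Rabs (Do M (t + tn M i))) <= 2 * INR M * (8 + 4 * ln (INR (2 * M)))).
 { apply H2. intros y; split. apply Rabs_pos. apply Do_bound; auto. }
 eapply Rle_trans. apply rsum_le. intros i _. rewrite Co_expand by auto. rewrite Rabs_mult, Rabs_right.
 apply Rmult_le_compat_l. left; apply Rinv_0_lt_compat; lra. apply Rabs_triang. left; apply Rinv_0_lt_compat; lra.
 rewrite rsum_scal, rsum_plus.
 apply (Rmult_le_reg_l (INR M)); auto. rewrite <- Rmult_assoc, Rinv_r by lra. lra. Qed.

Lemma total_bound M N t th : (1 <= M)%nat -> (1 <= N)%nat ->
  rsum (S M) (fun i1 => rsum (Lr M N i1) (fun j => Cmod (Kn M N i1 j t th))) <=
  8 * (8 + 4 * ln (INR N)) * (8 + 4 * ln (INR (2 * M))).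
Proof. intros HM HN. assert (0 < INR N) by (apply lt_0_INR; lia).
 assert (HlN : 0 <= ln (INR N)) by (rewrite <- ln_1; apply ln_le; [lra| apply (le_INR 1); auto]).
 set (B := 8 + 4 * ln (INR N)).
 assert (Hrow : forall i1, rsum (Lr M N i1) (fun j => Cmod (Kn M N i1 j t th)) <= B * (Rabs (Ce M t (tn M i1)) + Rabs (Co M t (tn M i1)))).
 { intros i1. eapply Rle_trans. apply rsum_le. intros j _. apply Kn_bound.
   rewrite rsum_scal, rsum_plus, !rsum_scal.
   pose proof (row_bound M N i1 (e0 N) th HN). pose proof (row_bound M N i1 (o0 N) th HN).
   pose proof (Rabs_pos (Ce M t (tn M i1))). pose proof (Rabs_pos (Co M t (tn M i1))).
   apply Rle_trans with (/ (2 * INR N) * (Rabs (Ce M t (tn M i1)) * (2 * (INR N * B)) + Rabs (Co M t (tn M i1)) * (2 * (INR N * B)))).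
   apply Rmult_le_compat_l. left; apply Rinv_0_lt_compat; lra.
   apply Rplus_le_compat; apply Rmult_le_compat_l; auto.
   right. field. lra. }
 eapply Rle_trans. apply rsum_le. intros i1 _. apply Hrow.
 rewrite rsum_scal, rsum_plus. pose proof (sumCe_bound M t HM). pose proof (sumCo_bound M t HM).
 assert (0 <= B) by (unfold B; lra).
 replace (8 * B * (8 + 4 * ln (INR (2 * M)))) with (B * (4 * (8 + 4 * ln (INR (2 * M))) + 4 * (8 + 4 * ln (INR (2 * M))))) by ring.
 apply Rmult_le_compat_l; auto. lra. Qed.

Open Scope R_scope.

Definition cg (a b : nat -> Z -> R) (g : nat * Z) : C := (a (fst g) (snd g), b (fst g) (snd g)).
Definition Q M N a b t th : C :=
  csumL (Gamma_sq M N) (fun g => Cmult (cg a b g) (Cmult (RtoC (cos (INR (fst g) * t))) (cis (IZR (snd g) * th)))).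

Lemma PQ M N a b r th : (Psq_re M N a b r th, Psq_im M N a b r th) = Q M N a b (acos r) th.
Proof. unfold Psq_re, Psq_im, Q, sumL, csumL. induction (Gamma_sq M N) as [|g l IH]; simpl. reflexivity.
 rewrite <- IH. unfold cg, chebT, cis, RtoC, Cmult, Cplus; simpl. f_equal; ring. Qed.

Lemma cmod_Cmod x y : cmod x y = Cmod (x, y).
Proof. unfold cmod, Cmod; simpl. f_equal; ring. Qed.

Lemma Gamma_mem M N g : In g (Gamma_sq M N) ->
  (fst g <= 2 * M)%nat /\ (- Z.of_nat N < snd g <= Z.of_nat N)%Z /\ Z.even (Z.of_nat (fst g) + snd g) = true.
Proof. unfold Gamma_sq. rewrite filter_In. destruct g as [g1 g2]. rewrite in_prod_iff, in_seq, in_map_iff.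
 intros [[H1 [k [Hk Hk']]] He]. apply in_seq in Hk'. simpl in *. repeat split; try lia; auto. Qed.

Open Scope C_scope.
Lemma Q_expand M N a b t th : (1 <= M)%nat -> (1 <= N)%nat ->
  Q M N a b t th = csum (S M) (fun i1 => csum (Lr M N i1) (fun j =>
     Q M N a b (tn M i1) (thn N i1 j) * Kn M N i1 j t th)).
Proof. intros HM HN. unfold Q at 1.
 rewrite (csumL_ext _ _ (fun g => csum (S M) (fun i1 => csum (Lr M N i1) (fun j =>
     cg a b g * (RtoC (cos (INR (fst g) * tn M i1)) * cis (IZR (snd g) * thn N i1 j)) * Kn M N i1 j t th)))).
 2:{ intros g Hg. apply Gamma_mem in Hg. destruct Hg as (H1 & H2 & H3).
     rewrite <- (repro M N (fst g) (snd g) t th) by auto. rewrite <- csum_scal. apply csum_ext. intros i1 _.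
     rewrite <- csum_scal. apply csum_ext. intros j _. ring. }
 rewrite csumL_swap. apply csum_ext. intros i1 _. rewrite csumL_swap. apply csum_ext. intros j _.
 unfold Q. rewrite <- csumL_scal_r. auto. Qed.
Close Scope C_scope.

Lemma node_Im M N i1 j : (1 <= N)%nat -> (i1 <= M)%nat -> (j < Lr M N i1)%nat -> in_Im M N i1 (i2z N i1 j).
Proof. intros HN Hi Hj. unfold in_Im, i2z, qz.
 pose proof (Nat.div_mod i1 2 ltac:(lia)). pose proof (Nat.mod_upper_bound i1 2 ltac:(lia)).
 unfold Lr in Hj. destruct (Nat.eqb_spec i1 M).
 - repeat split; try lia. apply Z.even_spec. exists (Z.of_nat (i1 / 2) + Z.of_nat j + 1 - Z.of_nat N)%Z. lia.
 - repeat split; try lia. apply Z.even_spec. exists (Z.of_nat (i1 / 2) + Z.of_nat j + 1 - Z.of_nat N)%Z. lia.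
Qed.

Lemma node_dom M N i1 j : (1 <= M)%nat -> (1 <= N)%nat -> (i1 <= M)%nat -> (j < Lr M N i1)%nat ->
  in_dom (rnode M i1) (thnode N (i2z N i1 j)).
Proof. intros HM HN Hi Hj. assert (0 < INR M) by (apply lt_0_INR; lia). assert (0 < INR N) by (apply lt_0_INR; lia).
 pose proof PI_RGT_0.
 assert (Ht : 0 <= INR i1 * PI / (2 * INR M) <= PI / 2).
 { assert (INR i1 <= INR M) by (apply le_INR; auto). pose proof (pos_INR i1). split.
   apply Rmult_le_pos. apply Rmult_le_pos; lra. left; apply Rinv_0_lt_compat; lra.
   apply (Rmult_le_reg_r (2 * INR M)). lra. unfold Rdiv. rewrite Rmult_assoc, Rinv_l by lra. nra. }
 assert (Hb : (- 2 * Z.of_nat N <= i2z N i1 j <= 2 * Z.of_nat N)%Z).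
 { unfold i2z, qz, Lr in *. pose proof (Nat.mod_upper_bound i1 2 ltac:(lia)). destruct (Nat.eqb i1 M); lia. }
 split.
 - unfold rnode. split. apply cos_ge_0; lra. apply COS_bound.
 - unfold thnode. destruct Hb as [Hb1 Hb2]. apply IZR_le in Hb1. apply IZR_le in Hb2.
   rewrite mult_IZR, <- INR_IZR_INZ in Hb1, Hb2.
   split; apply (Rmult_le_reg_r (2 * INR N)); try lra; unfold Rdiv; rewrite Rmult_assoc, Rinv_l by lra; nra. Qed.

Lemma numeric M N : (1 <= M)%nat -> (1 <= N)%nat ->
  8 * (8 + 4 * ln (INR N)) * (8 + 4 * ln (INR (2 * M))) <= 3840 * ln (INR M + 1) * ln (INR N + 1).
Proof. intros HM HN. assert (1 <= INR M) by (apply (le_INR 1); auto). assert (1 <= INR N) by (apply (le_INR 1); auto).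
 assert (Hl2 : / 2 <= ln 2) by (pose proof (ln_ge 2 ltac:(lra)); lra).
 assert (HN1 : ln 2 <= ln (INR N + 1)) by (apply ln_le; lra).
 assert (HM1 : ln 2 <= ln (INR M + 1)) by (apply ln_le; lra).
 assert (HN2 : 0 <= ln (INR N)) by (rewrite <- ln_1; apply ln_le; lra).
 assert (HN3 : ln (INR N) <= ln (INR N + 1)) by (apply ln_le; lra).
 assert (HM2 : 0 <= ln (INR (2 * M))) by (rewrite <- ln_1; apply ln_le; [lra| rewrite mult_INR; simpl; lra]).
 assert (HM3 : ln (INR (2 * M)) <= ln 2 + ln (INR M + 1)).
 { rewrite <- ln_mult by lra. apply ln_le. rewrite mult_INR; simpl; lra. rewrite mult_INR; simpl; lra. }
 assert (A1 : 8 + 4 * ln (INR N) <= 20 * ln (INR N + 1)) by lra.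
 assert (A2 : 8 + 4 * ln (INR (2 * M)) <= 24 * ln (INR M + 1)) by lra.
 replace (3840 * ln (INR M + 1) * ln (INR N + 1)) with (8 * (20 * ln (INR N + 1)) * (24 * ln (INR M + 1))) by ring.
 apply Rmult_le_compat; try lra. Qed.

Open Scope R_scope.
Theorem theorem8p2 :
  exists C : R, 0 < C /\
  forall (m1 m2 : nat), (1 <= m1)%nat -> (1 <= m2)%nat ->
  forall (fre fim : R -> R -> R),
    in_CD fre -> in_CD fim ->
    (forall r th, in_dom r th -> cmod (fre r th) (fim r th) <= 1) ->
  forall (a b : nat -> Z -> R),
    (forall (i1 : nat) (i2 : Z), in_Im m1 m2 i1 i2 ->
       Psq_re m1 m2 a b (rnode m1 i1) (thnode m2 i2) = fre (rnode m1 i1) (thnode m2 i2) /\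
       Psq_im m1 m2 a b (rnode m1 i1) (thnode m2 i2) = fim (rnode m1 i1) (thnode m2 i2)) ->
  forall r th, in_dom r th ->
    cmod (Psq_re m1 m2 a b r th) (Psq_im m1 m2 a b r th)
      <= C * ln (INR m1 + 1) * ln (INR m2 + 1).
Proof.
 exists 3840. split. lra.
 intros M N HM HN fre fim _ _ Hbd a b Hint r th Hdom.
 rewrite cmod_Cmod, PQ, Q_expand by auto.
 eapply Rle_trans. apply Cmod_csum2.
 eapply Rle_trans with (rsum (S M) (fun i1 => rsum (Lr M N i1) (fun j => Cmod (Kn M N i1 j (acos r) th)))).
 - apply rsum_le. intros i1 Hi1. apply rsum_le. intros j Hj. rewrite Cmod_mult.
   assert (HQ : Cmod (Q M N a b (tn M i1) (thn N i1 j)) <= 1).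
   { assert (Ha : acos (rnode M i1) = tn M i1).
     { unfold rnode, tn. apply acos_cos. pose proof PI_RGT_0. assert (0 < INR M) by (apply lt_0_INR; lia).
       assert (INR i1 <= INR M) by (apply le_INR; lia). pose proof (pos_INR i1). split.
       apply Rmult_le_pos. apply Rmult_le_pos; lra. left; apply Rinv_0_lt_compat; lra.
       apply (Rmult_le_reg_r (2 * INR M)). lra. unfold Rdiv. rewrite Rmult_assoc, Rinv_l by lra. nra. }
     rewrite <- Ha. change (thn N i1 j) with (thnode N (i2z N i1 j)). rewrite <- PQ.
     destruct (Hint i1 (i2z N i1 j)) as [E1 E2]. apply node_Im; auto; lia.
     rewrite E1, E2, <- cmod_Cmod. apply Hbd. apply node_dom; auto; lia. }
   pose proof (Cmod_ge_0 (Kn M N i1 j (acos r) th)). pose proof (Cmod_ge_0 (Q M N a b (tn M i1) (thn N i1 j))). nra.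
 - eapply Rle_trans. apply total_bound; auto. apply numeric; auto.
Qed.
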